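(* For every $n\ge1$, $\Phi_n(x)$ is a polynomial of degree $n+2$, and \[ \Phi_n(2)=\Phi_n'(2)=0,\qquad \Phi_n(-2)=16(n+1)(-1)^n. \]
   Context: $U_n$ is the Chebyshev polynomial of the second kind, $U_n(\cos\theta)=\sin((n+1)\theta)/\sin\theta$, $\tilde U_n(x)=U_n(x/2)$, and $\Phi_n(x)=((n+1)x^2-6x-4n)\tilde U_n(x)+2(x+2)\tilde U_{n-1}(x)+2(x+2)$. *)

(* Defs.v *)
From mathcomp Require Import all_boot all_order all_algebra.
Set Implicit Arguments. Unset Strict Implicit. Unset Printing Implicit Defensive.
Import Order.TTheory GRing.Theory Num.Theory.
Local Open Scope ring_scope.

(* Utilde n = U_n(x/2), the rescaled Chebyshev polynomial of the second kind,
   given by its standard recurrence Ut 0 = 1, Ut 1 = X, Ut (n+2) = X Ut(n+1) - Ut n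
   (this is U_n(x/2) since U_{n+2}(y) = 2y U_{n+1}(y) - U_n(y), U_0 = 1, U_1 = 2y). *)
Fixpoint Utilde (R : nzRingType) (n : nat) : {poly R} :=
  match n with
  | 0%N => 1
  | 1%N => 'X
  | S (S m as m1) => 'X * Utilde R m1 - Utilde R m
  end.

Definition Phi (R : comNzRingType) (n : nat) : {poly R} :=
  ((n.+1)%:R *: 'X^2 - 6%:R *: 'X - (4 * n)%:R%:P) * Utilde R n
  + 2%:R *: ('X + 2%:R%:P) * Utilde R n.-1
  + 2%:R *: ('X + 2%:R%:P).

(* Main.v *)
Require Import Defs.
From mathcomp Require Import all_boot all_order all_algebra.
From mathcomp Require Import ring lra zify.
Import Order.TTheory GRing.Theory Num.Theory.
Local Open Scope ring_scope.

Lemma Ut_SS (R : nzRingType) n : Utilde R n.+2 = 'X * Utilde R n.+1 - Utilde R n.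
Proof. by []. Qed.

Lemma Ut_eval (R : comNzRingType) n :
  ((Utilde R n).[2%:R] = n.+1%:R /\ (Utilde R n.+1).[2%:R] = n.+2%:R) /\
  ((Utilde R n).[-2%:R] = (-1)^+n * n.+1%:R /\ (Utilde R n.+1).[-2%:R] = (-1)^+n.+1 * n.+2%:R) /\
  (6%:R * (Utilde R n)^`().[2%:R] = (n * n.+1 * n.+2)%:R /\
   6%:R * (Utilde R n.+1)^`().[2%:R] = (n.+1 * n.+2 * n.+3)%:R).
Proof.
elim: n => [|n [[A1 A2] [[B1 B2] [C1 C2]]]].
  rewrite /= !derivE !hornerE. split; [split|split; split]; ring.
split; [split|split; split] => //.
- rewrite Ut_SS !hornerE A1 A2. ring.
- rewrite Ut_SS !hornerE B1 B2 !exprS. ring.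
- rewrite Ut_SS !derivE !hornerE.
  rewrite A2.
  have -> : forall a b c : R, 6%:R * (a + 2%:R * b - c) = 6%:R * a + 2%:R * (6%:R * b) - 6%:R * c by move=> *; ring.
  rewrite C1 C2. ring.
Qed.


Lemma Ut_size (R : nzRingType) n :
  (Utilde R n \is monic /\ size (Utilde R n) = n.+1) /\
  (Utilde R n.+1 \is monic /\ size (Utilde R n.+1) = n.+2).
Proof.
elim: n => [|n [[M1 S1] [M2 S2]]].
  by rewrite /= monic1 monicX size_polyX size_poly1.
split=> //.
have hs : size ('X * Utilde R n.+1) = n.+3.
  by rewrite size_monicM ?monicX ?size_polyX ?S2 // -size_poly_eq0 S2.
have hl : (size (- Utilde R n)%R < size ('X * Utilde R n.+1)%R)%N by rewrite size_polyN hs S1.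
rewrite Ut_SS; split.
  by rewrite monicE lead_coefDl // lead_coef_monicM ?monicX // -monicE.
by rewrite size_addl.
Qed.

Lemma Phi_vals (R : fieldType) (h6 : (6%:R : R) != 0) m :
  (Phi R m.+1).[2%:R] = 0 /\ (Phi R m.+1)^`().[2%:R] = 0 /\
  (Phi R m.+1).[- 2%:R] = 16%:R * (m.+2)%:R * (-1) ^+ m.+1.
Proof.
have [[A1 A2] [[B1 B2] [C1 C2]]] := Ut_eval R m.
have D1 : (Utilde R m)^`().[2%:R] = (m * m.+1 * m.+2)%:R / 6%:R.
  by rewrite -C1 mulrC mulKf.
have D2 : (Utilde R m.+1)^`().[2%:R] = (m.+1 * m.+2 * m.+3)%:R / 6%:R.
  by rewrite -C2 mulrC mulKf.
rewrite /Phi [(m.+1).-1]/=.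
split; last split.
- rewrite !(hornerD, hornerN, hornerM, hornerZ, hornerX, hornerC, hornerXn) A1 A2. ring.
- rewrite !derivE !(hornerD, hornerN, hornerM, hornerZ, hornerX, hornerC, hornerXn) ?horner1 ?horner0 ?hornerMn A1 A2 D1 D2. by field.
- rewrite !(hornerD, hornerN, hornerM, hornerZ, hornerX, hornerC, hornerXn) B1 B2 !exprS. ring.
Qed.

Theorem lemma4p9 (R : realFieldType) (n : nat) (hn : (1 <= n)%N) :
  (size (Phi R n)).-1 = n.+2
  /\ (Phi R n).[2%:R] = 0
  /\ (Phi R n)^`().[2%:R] = 0
  /\ (Phi R n).[- 2%:R] = 16%:R * (n.+1)%:R * (-1) ^+ n.
Proof.
case: n hn => [//|m] _.
have h6 : (6%:R : R) != 0 by rewrite pnatr_eq0.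
have [V1 [V2 V3]] := @Phi_vals R h6 m.
split; last by [].
have h2 : (m.+2%:R : R) != 0 by rewrite pnatr_eq0.
have [[_ S1] [M2 S2]] := Ut_size R m.
rewrite /Phi [(m.+1).-1]/=.
set A := (m.+2%:R *: 'X^2 - 6%:R *: 'X - ((4 * m.+1)%:R)%:P : {poly R}).
have sA : size A = 3%N.
  rewrite /A -addrA size_polyDl ?size_scale ?size_polyXn //.
  apply: leq_ltn_trans (size_polyD _ _) _.
  rewrite size_polyN gtn_max size_polyN size_polyC.
  apply/andP; split; last by case: (_ != 0).
  by apply: leq_ltn_trans (size_scale_leq _ _) _; rewrite size_polyX.
have sAU : size (A * Utilde R m.+1) = m.+4.
  rewrite size_mul ?sA ?S2 // -size_poly_eq0 ?sA ?S2 //.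
have sL : (size (2%:R *: ('X + 2%:R%:P) : {poly R})%R <= 2)%N.
  by apply: leq_trans (size_scale_leq _ _) _; rewrite size_XaddC.
rewrite -addrA size_polyDl sAU //.
apply: leq_ltn_trans (size_polyD _ _) _.
rewrite gtn_max; apply/andP; split; last by apply: leq_ltn_trans sL _.
apply: leq_ltn_trans (size_mul_leq _ _) _.
rewrite S1.
move: sL; set k := size _ => sL. rewrite -subn1; lia.
Qed.
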